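(* Let $A$ be a set of $n$ items with costs $c(i)\ge 0$, each satisfying $c(i)\le B$ for a budget $B>0$, and let $v:2^A\to\mathbb{R}_{\ge0}$ be monotone subadditive with $v(\emptyset)=0$, accessible via a demand oracle. The algorithm SA-alg-max below outputs a set $S$ with $c(S)\le B$ and $v(S)\ge \frac18\max\{v(S')\,:\,S'\subseteq A,\ c(S')\le B\}$. SA-alg-max: let $v^*=\max_{i\in A}v(\{i\})$ and $\mathcal V=\{v^*,2v^*,\dots,nv^*\}$. For each $u\in\mathcal V$: set prices $p(i)=\frac{u}{2B}c(i)$, and let $T\in\arg\max_{S\subseteq A}\big(v(S)-\sum_{i\in S}p(i)\big)$ (obtained by a demand query); let $S_u=\emptyset$; if $v(T)<\frac u2$, continue to the next $u$; otherwise, going through the items of $T$ in decreasing order of $c(i)$, put items from $T$ into $S_u$ while preserving the budget constraint $c(S_u)\le B$. Output the set $S_u$ with the largest value $v(S_u)$ over all $u\in\mathcal V$.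
   Context: A demand oracle, given a price vector $p(1),\dots,p(n)$, returns a set $T\in\arg\max_{S\subseteq A}\big(v(S)-\sum_{i\in S}p(i)\big)$ in unit time. Subadditive: $v(S)+v(T)\ge v(S\cup T)$ for all $S,T$. *)

(* Defs.v *)
From mathcomp Require Import all_boot all_order all_algebra.
Set Implicit Arguments. Unset Strict Implicit. Unset Printing Implicit Defensive.
Import Order.TTheory GRing.Theory Num.Theory.
Local Open Scope ring_scope.

Section Defs.
Variables (R : realFieldType) (A : finType).

Definition cost (c : A -> R) (S : {set A}) : R := \sum_(i in S) c i.

Definition monotone_fun (v : {set A} -> R) : Prop :=
  forall S T : {set A}, S \subset T -> v S <= v T.

Definition subadditive (v : {set A} -> R) : Prop :=
  forall S T : {set A}, v (S :|: T) <= v S + v T.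

Definition demand_oracle (v : {set A} -> R) (dem : (A -> R) -> {set A}) : Prop :=
  forall (p : A -> R) (S : {set A}),
    v S - \sum_(i in S) p i <= v (dem p) - \sum_(i in dem p) p i.

(* v* = max_i v({i})  (v >= 0, so 0 is a harmless default for the fold) *)
Definition vstar (v : {set A} -> R) : R := \big[Num.max/0]_(i : A) v [set i].

Definition in_Vgrid (v : {set A} -> R) (u : R) : Prop :=
  exists k : nat, (k < #|A|)%N /\ u = (k.+1)%:R * vstar v.

Definition prices (B : R) (c : A -> R) (u : R) : A -> R :=
  fun i => u / (2 * B) * c i.

Fixpoint greedy (B : R) (c : A -> R) (s : seq A) (acc : R) : seq A :=
  match s with
  | [::] => [::]
  | x :: s' => if acc + c x <= B then x :: greedy B c s' (acc + c x) else [::]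
  end.

Definition S_u (v : {set A} -> R) (B : R) (c : A -> R)
    (dem : (A -> R) -> {set A}) (ord : R -> seq A) (u : R) : {set A} :=
  let T := dem (prices B c u) in
  if v T < u / 2 then set0 else [set x in greedy B c (ord u) 0].

Definition valid_order (B : R) (c : A -> R) (dem : (A -> R) -> {set A})
    (ord : R -> seq A) : Prop :=
  forall u : R, perm_eq (ord u) (enum (dem (prices B c u))) /\
                sorted (fun x y => c y <= c x) (ord u).

End Defs.

(* Main.v *)
Require Import Defs.
From mathcomp Require Import all_boot all_order all_algebra.
From mathcomp Require Import ring lra zify.
From Stdlib Require Import Lia.
Import Order.TTheory GRing.Theory Num.Theory.
Local Open Scope ring_scope.

Section Helpers.
Variables (R : realFieldType) (A : finType).

Lemma vstar_ge (v : {set A} -> R) i : v [set i] <= vstar v.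
Proof.
rewrite /vstar.
have : i \in index_enum A by rewrite mem_index_enum.
elim: (index_enum A) => [|y r IH] //=.
rewrite big_cons inE le_max => /orP [/eqP ->|/IH ->]; first by rewrite lexx.
by rewrite orbT.
Qed.

Lemma vstar_cases (v : {set A} -> R) : vstar v = 0 \/ exists i, vstar v = v [set i].
Proof.
rewrite /vstar; apply: (big_ind (fun x => x = 0 \/ exists i, x = v [set i])); first by left.
  move=> x y Hx Hy; rewrite /Num.max; by case: ifP.
by move=> i _; right; exists i.
Qed.

Lemma vstar_ge0 (v : {set A} -> R) : (forall S, 0 <= v S) -> 0 <= vstar v.
Proof.
move=> h; rewrite /vstar; apply: (big_ind (fun x => 0 <= x)) => //.
by move=> x y hx hy; rewrite le_max hx.
Qed.

Lemma sub_bound (v : {set A} -> R) (s : seq A) :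
  v set0 = 0 -> subadditive v ->
  v [set x in s] <= (size s)%:R * vstar v.
Proof.
move=> h0 hs; elim: s => [|x s IH].
  have -> : [set x in [::]] = set0 :> {set A} by apply/setP => y; rewrite !inE.
  by rewrite h0 mul0r.
have -> : [set y in x :: s] = [set x] :|: [set y in s].
  by apply/setP => y; rewrite !inE.
apply: le_trans (hs _ _) _.
rewrite /= mulrSr mulrDl mul1r addrC.
by apply: lerD => //; apply: vstar_ge.
Qed.

Lemma sub_boundS (v : {set A} -> R) (S : {set A}) :
  v set0 = 0 -> subadditive v -> (forall S, 0 <= v S) ->
  v S <= #|A|%:R * vstar v.
Proof.
move=> h0 hs hp.
have -> : S = [set x in enum S] by apply/setP => y; rewrite !inE mem_enum.
have := sub_bound v (enum S) h0 hs. move=> H. apply: (le_trans H).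
apply: ler_wpM2r; first exact: vstar_ge0.
rewrite ler_nat -cardE; exact: max_card.
Qed.

Lemma grid (a w : R) (n : nat) : 0 < a -> a <= w -> w <= n%:R * a ->
  exists k, (k < n)%N /\ (k.+1)%:R * a <= w /\ w <= 2 * (k.+1)%:R * a.
Proof.
move=> ha; elim: n => [|m IH] haw hw.
  by rewrite mul0r in hw; exfalso; lra.
case: m IH hw => [|m] IH hw.
  exists 0%N; split => //; rewrite mulr1 in hw *; split => //; lra.
case: (lerP w ((m.+1)%:R * a)) => h.
  by case: (IH haw h) => k [hk H]; exists k; split => //; apply: ltnW.
exists m; split => //; split; first exact: ltW.
apply: (le_trans hw).
have hn : (m.+2)%:R <= 2 * (m.+1)%:R :> R.
  have e : 2 * (m.+1)%:R = ((2 * m.+1)%N)%:R :> R by rewrite natrM.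
  rewrite e ler_nat; lia.
by rewrite ler_wpM2r // ltW.
Qed.


Lemma greedy_spec (B : R) (c : A -> R) (s : seq A) (acc : R) :
  (forall x, 0 <= c x) -> (forall x, c x <= B) ->
  sorted (fun x y => c y <= c x) s -> 0 <= acc -> acc <= B ->
  (acc = 0 \/ forall y, y \in s -> c y <= acc) ->
  exists r, s = greedy B c s acc ++ r /\
    acc + \sum_(i <- greedy B c s acc) c i <= B /\
    (r = [::] \/ B < 2 * (acc + \sum_(i <- greedy B c s acc) c i)).
Proof.
move=> hc hB; elim: s acc => [|x s IH] acc hs ha0 haB hinv.
  by exists [::]; rewrite /= big_nil addr0; split => //; split => //; left.
have htr : transitive (fun x y : A => c y <= c x).
  by move=> a b d h1 h2; apply: le_trans h2 h1.
have hall := order_path_min htr hs.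
have hs' : sorted (fun x y => c y <= c x) s by exact: path_sorted hs.
rewrite /=; case: ifP => hx.
  have [|||r [e [h1 h2]]] := IH (acc + c x) hs'.
  - by apply: addr_ge0.
  - exact: hx.
  - right => y hy; move/allP: hall => /(_ y hy) /= hy'.
    apply: le_trans hy' _; rewrite lerDr //.
  exists r; rewrite big_cons; split; first by rewrite cat_cons -e.
  by rewrite addrA; split.
exists (x :: s); rewrite big_nil addr0; split => //; split => //; right.
move/negbT: hx; rewrite -ltNge => hx.
case: hinv => [e|h].
  by move: hx; rewrite e add0r => hx; have := hB x; lra.
have := h x (mem_head _ _); lra.
Qed.


Lemma cost_set (c : A -> R) (g : seq A) : uniq g ->
  cost c [set x in g] = \sum_(i <- g) c i.
Proof.
move=> hu; rewrite /cost big_uniq //; apply: eq_bigl => y; by rewrite inE.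
Qed.

Lemma cost_ge0 (c : A -> R) (S : {set A}) : (forall x, 0 <= c x) -> 0 <= cost c S.
Proof. by move=> h; rewrite /cost; apply: sumr_ge0. Qed.

Lemma sum_prices (B : R) (c : A -> R) u (S : {set A}) :
  \sum_(i in S) prices B c u i = u / (2 * B) * cost c S.
Proof. by rewrite /cost mulr_sumr. Qed.

Lemma Su_cost (c : A -> R) (B : R) v dem ord u :
  0 < B -> (forall i, 0 <= c i) -> (forall i, c i <= B) ->
  valid_order B c dem ord -> cost c (S_u v B c dem ord u) <= B.
Proof.
move=> hB0 hc hB hvo; rewrite /S_u; case: ifP => _.
  by rewrite /cost big_set0 ltW.
have [hperm hsort] := hvo u.
have [r [e [h1 _]]] := greedy_spec B c (ord u) 0 hc hB hsort (lexx 0) (ltW hB0) (or_introl erefl).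
have hu : uniq (ord u) by rewrite (perm_uniq hperm) enum_uniq.
rewrite cost_set; first by rewrite add0r in h1.
by move: hu; rewrite {1}e cat_uniq => /andP [].
Qed.

Lemma core (c : A -> R) (B : R) v dem ord u W :
  0 < B -> (forall i, 0 <= c i) -> (forall i, c i <= B) ->
  (forall S, 0 <= v S) -> subadditive v -> demand_oracle v dem ->
  valid_order B c dem ord -> 0 <= u -> cost c W <= B -> u <= v W ->
  u / 4 <= v (S_u v B c dem ord u).
Proof.
move=> hB0 hc hB hv hsub hdem hvo hu0 hW huW.
set k := u / (2 * B).
have hk0 : 0 <= k by rewrite /k divr_ge0 // mulr_ge0 // ltW.
have hkB : k * B = u / 2 by rewrite /k; field; rewrite gt_eqF.
set T := dem (prices B c u).
have hd := hdem (prices B c u) W; rewrite -/T !sum_prices -/k in hd.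
have hkW : k * cost c W <= k * B by apply: ler_wpM2l.
have hkT : 0 <= k * cost c T by apply: mulr_ge0 => //; apply: cost_ge0.
have hvT : u / 2 <= v T by lra.
rewrite /S_u -/T ifF; last by apply/negbTE; rewrite -leNgt.
have [hperm hsort] := hvo u.
have [r [e [h1 h2]]] := greedy_spec B c (ord u) 0 hc hB hsort (lexx 0) (ltW hB0) (or_introl erefl).
have hu : uniq (ord u) by rewrite (perm_uniq hperm) enum_uniq.
have hgu : uniq (greedy B c (ord u) 0) by move: hu; rewrite {1}e cat_uniq => /andP [].
set g := greedy B c (ord u) 0 in e h1 h2 hgu *.
have memT : forall y, (y \in ord u) = (y \in T) by move=> y; rewrite (perm_mem hperm) mem_enum.
case: h2 => [er|hBg].
  have -> : [set x in g] = T.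
    by apply/setP => y; rewrite inE -memT e er cats0.
  lra.
set S := [set x in g].
have hST : S \subset T.
  by apply/subsetP => y; rewrite inE -memT e mem_cat => ->.
have hd2 := hdem (prices B c u) (T :\: S); rewrite -/T in hd2.
rewrite [X in _ <= _ - X](big_setID S) /= (setIidPr hST) in hd2.
rewrite !sum_prices -/k in hd2.
have hs := hsub S (T :\: S); rewrite (_ : S :|: T :\: S = T) in hs; last first.
  by rewrite -{2}(setID T S) (setIidPr hST).
have hcS : B / 2 <= cost c S by rewrite /S cost_set //; lra.
have hkS : k * (B / 2) <= k * cost c S by apply: ler_wpM2l.
have : k * (B / 2) = u / 4 by rewrite /k; field; rewrite gt_eqF.
lra.
Qed.

End Helpers.
Theorem lemma3p5 (R : realFieldType) (A : finType) (c : A -> R) (B : R)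
    (v : {set A} -> R) (dem : (A -> R) -> {set A}) (ord : R -> seq A) (u0 : R) :
  0 < B ->
  (forall i, 0 <= c i) ->
  (forall i, c i <= B) ->
  (forall S, 0 <= v S) ->
  v set0 = 0 ->
  monotone_fun v ->
  subadditive v ->
  demand_oracle v dem ->
  valid_order B c dem ord ->
  (* the output: S_{u0} with u0 in V maximizing v(S_u) over u in V *)
  in_Vgrid v u0 ->
  (forall u, in_Vgrid v u -> v (S_u v B c dem ord u) <= v (S_u v B c dem ord u0)) ->
  cost c (S_u v B c dem ord u0) <= B /\
  (forall S' : {set A}, cost c S' <= B -> v S' <= 8 * v (S_u v B c dem ord u0)).
Proof.
move=> hB0 hc hB hv hv0 hmon hsub hdem hvo hgrid hmax.
split; first exact: Su_cost.
set vs := vstar v.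
have hvs0 : 0 <= vs by apply: vstar_ge0.
have hSu0 : 0 <= v (S_u v B c dem ord u0) by [].
have helper : forall W, cost c W <= B -> vs <= v W ->
    v W <= 8 * v (S_u v B c dem ord u0).
  move=> W hW hvsW.
  have hvsp : 0 < vs \/ vs = 0.
    by move: hvs0; rewrite le_eqVlt => /orP [/eqP ->|->]; [right|left].
  case: hvsp => hvsp; last first.
    have := @sub_boundS R A v W hv0 hsub hv; rewrite -/vs hvsp mulr0 => h; lra.
  have [k [hk [h1 h2]]] := @grid R _ _ _ hvsp hvsW (@sub_boundS R A v W hv0 hsub hv).
  have hg : in_Vgrid v ((k.+1)%:R * vs) by exists k.
  have hu0 : 0 <= (k.+1)%:R * vs by apply: mulr_ge0.
  have hc4 := @core R A c B v dem ord _ W hB0 hc hB hv hsub hdem hvo hu0 hW h1.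
  have := hmax _ hg; lra.
move=> S' hS'.
case: (lerP vs (v S')) => h; first exact: helper.
case: (@vstar_cases R A v) => [e|[i ei]].
  by move: h; rewrite /vs e => h; have := hv S'; lra.
have hci : cost c [set i] <= B by rewrite /cost big_set1.
move: h; rewrite /vs ei => h; have := helper _ hci; rewrite /vs ei => H; have := H (lexx _); lra.
Qed.
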